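(* Let $F$ be a germ of holomorphic diffeomorphism of $(\mathbb C^2,0)$ of the form $F(x,y)=(x+p(x,y),y+q(x,y))$ with $\min\{\nu(p),\nu(q)\}\ge2$, and let $X=a\frac{\partial}{\partial x}+b\frac{\partial}{\partial y}$ be a formal vector field with $a,b\in\mathbb C[[x,y]]$, $\min\{\nu(a),\nu(b)\}\ge2$, such that $F=\mathrm{Exp}(X)$, i.e. $F=(\exp X(x),\exp X(y))$. Let $\pi:(M,D)\to(\mathbb C^2,0)$ be the blow-up at the origin, let $\tilde F$ be the unique germ of diffeomorphism of $(M,D)$ with $\pi\circ\tilde F=F\circ\pi$ and $\tilde F|_D=\mathrm{id}_D$, and let $\tilde X$ be the formal vector field along $D$ with $D\pi\cdot\tilde X=X\circ\pi$. Then for every characteristic direction $p\in D$ of $F$ we have $$\tilde F_p=\mathrm{Exp}(\tilde X_p),$$ where $\tilde F_p$, $\tilde X_p$ are the germs at $p$ and $\mathrm{Exp}$ is computed in local coordinates $(u,w)$ centered at $p$, i.e. $\mathrm{Exp}(\tilde X_p)=(\exp\tilde X_p(u),\exp\tilde X_p(w))$.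
   Context: $\nu(h)$ is the order of a power series $h$. For a formal vector field $Y$ of order $\ge2$ and a formal series $g$, $\exp Y(g)=\sum_{j\ge0}\frac1{j!}Y^j(g)$ with $Y^0(g)=g$, $Y^{j+1}(g)=Y(Y^j(g))$, the vector field acting as a derivation. Write $F(z)=z+P_k(z)+\cdots$ with $P_j$ homogeneous of degree $j$ and $P_k\not\equiv0$; a characteristic direction of $F$ is $[v]\in\mathbb P^1$ with $P_k(v)=\lambda v$ for some $\lambda\in\mathbb C$, and points of $D=\pi^{-1}(0)\cong\mathbb P^1$ are identified with directions. (At such points $\tilde F_p$ is tangent to the identity and $\tilde X_p$ has order $\ge2$.) *)

(* Defs.v *)
From HB Require Import structures.
From mathcomp Require Import all_boot all_order all_algebra.
From mathcomp Require Import complex.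
From mathcomp Require Import reals.
Set Implicit Arguments. Unset Strict Implicit. Unset Printing Implicit Defensive.
Import Order.TTheory GRing.Theory Num.Theory.
Local Open Scope ring_scope.

Section FPS.
Variable K : fieldType.

(* Formal power series in two variables: f i j = coefficient of x^i y^j
   (in a chart: u^i w^j). *)
Definition fps := nat -> nat -> K.

Definition fadd (f g : fps) : fps := fun i j => f i j + g i j.
Definition fmul (f g : fps) : fps := fun i j =>
  \sum_(a < i.+1) \sum_(b < j.+1) f a b * g (i - a)%N (j - b)%N.
Definition fconst (c : K) : fps := fun i j => if (i == 0%N) && (j == 0%N) then c else 0.
Definition fX : fps := fun i j => ((i == 1%N) && (j == 0%N))%:R.
Definition fY : fps := fun i j => ((i == 0%N) && (j == 1%N))%:R.
Definition fdx (f : fps) : fps := fun i j => f i.+1 j *+ i.+1.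
Definition fdy (f : fps) : fps := fun i j => f i j.+1 *+ j.+1.

Definition ord_ge (f : fps) (n : nat) : Prop := forall i j, (i + j < n)%N -> f i j = 0.

Definition vf_apply (Y : fps * fps) (g : fps) : fps :=
  fadd (fmul Y.1 (fdx g)) (fmul Y.2 (fdy g)).
Definition vf_iter (Y : fps * fps) (k : nat) (g : fps) : fps := iter k (vf_apply Y) g.

(* For nu(Y) >= 2, Y^k(g) has order >= k, so
   the coefficient of degree (i,j) only receives contributions from k <= i+j;
   the sum below is therefore the exact (formal) value. *)
Definition fexp (Y : fps * fps) (g : fps) : fps := fun i j =>
  \sum_(k < (i + j).+1) (k`!%:R)^-1 * vf_iter Y k g i j.

Definition fExp (Y : fps * fps) : fps * fps := (fexp Y fX, fexp Y fY).

(* Pullbacks g o pi along the two standard charts of the blow-up: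
   chart at [1:t] : pi(u,w) = (u, u (w + t)),
   chart at [0:1] : pi(u,w) = (u w, w).
   In both charts D = pi^-1(0) = {u = 0} resp. {w = 0} and p = (0,0). *)
Definition pull1 (t : K) (g : fps) : fps := fun i j =>
  \sum_(b < i.+1) g (i - b)%N b * ('C(b, j))%:R * t ^+ (b - j).
Definition pull2 (g : fps) : fps := fun i j =>
  if (i <= j)%N then g i (j - i)%N else 0.

(* A point of D = P^1: Some t is [1:t], None is [0:1]. *)
Definition dirvec (d : option K) : K * K :=
  match d with Some t => (1, t) | None => (0, 1) end.

Definition hev (f : fps) (k : nat) (v : K * K) : K :=
  \sum_(i < k.+1) f i (k - i)%N * v.1 ^+ i * v.2 ^+ (k - i).

(* [v] is a characteristic direction of F = id + (p,q):
   k = min(nu p, nu q), P_k = (p_k, q_k) not identically 0, P_k(v) = lambda v. *)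
Definition char_dir (p q : fps) (d : option K) : Prop :=
  exists k : nat,
    [/\ ord_ge p k /\ ord_ge q k,
        (exists2 i, (i <= k)%N & p i (k - i)%N != 0 \/ q i (k - i)%N != 0) &
        exists lam : K, hev p k (dirvec d) = lam * (dirvec d).1 /\
                        hev q k (dirvec d) = lam * (dirvec d).2].

(* (U,W) is the germ at p of the lift tilde F (in the chart coordinates
   centred at p) of F = (x + p, y + q):  pi o (U,W) = F o pi. *)
Definition lift_map (d : option K) (p q U W : fps) : Prop :=
  match d with
  | Some t => U = fadd fX (pull1 t p) /\
              fmul U (fadd W (fconst t)) = fadd (fmul fX (fadd fY (fconst t))) (pull1 t q)
  | None => W = fadd fY (pull2 q) /\
            fmul U W = fadd (fmul fX fY) (pull2 p)
  end.

(* (A,B) is the germ at p of the lift tilde X of X = a d/dx + b d/dy: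
   D pi . (A,B) = X o pi. *)
Definition lift_vf (d : option K) (a b A B : fps) : Prop :=
  match d with
  | Some t => A = pull1 t a /\
              fadd (fmul (fadd fY (fconst t)) A) (fmul fX B) = pull1 t b
  | None => fadd (fmul fY A) (fmul fX B) = pull2 a /\ B = pull2 b
  end.

End FPS.

Definition convergent (R : realType) (f : fps R[i]) : Prop :=
  exists M r : R, 0 < r /\ forall i j, `|f i j| * ((r ^+ (i + j))%:C)%C <= (M%:C)%C.
Arguments fX {K}.
Arguments fY {K}.

(* Main.v *)
Require Import Defs.
From HB Require Import structures.
From mathcomp Require Import all_boot all_order all_algebra.
From mathcomp Require Import complex reals.
From mathcomp Require Import boolp zify polyXY ring.
Import Order.TTheory GRing.Theory Num.Theory.
Local Open Scope ring_scope.
Set Implicit Arguments. Unset Strict Implicit. Unset Printing Implicit Defensive.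

Section Base.
Variable K : numFieldType.
Local Notation fps := (fps K).
Local Notation P := {poly {poly K}}.
Implicit Types (f g h : fps) (p q : P).

Definition cf p : fps := fun i j => (p`_i)`_j.
Definition tr (N : nat) f : P := \poly_(i < N) \poly_(j < N) f i j.

Lemma cf_tr N f i j : (i < N)%N -> (j < N)%N -> cf (tr N f) i j = f i j.
Proof. by move=> hi hj; rewrite /cf /tr coef_poly hi coef_poly hj. Qed.

Lemma cfM p q : cf (p * q) = fmul (cf p) (cf q).
Proof.
apply/funext => i; apply/funext => j.
rewrite /cf /fmul coefM coef_sum; apply: eq_bigr => a _; by rewrite coefM.
Qed.

Lemma cfD p q : cf (p + q) = fadd (cf p) (cf q).
Proof. by apply/funext => i; apply/funext => j; rewrite /cf /fadd !coefD. Qed.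

Lemma fmul_loc f g f' g' i j :
  (forall a b, (a <= i)%N -> (b <= j)%N -> f a b = f' a b) ->
  (forall a b, (a <= i)%N -> (b <= j)%N -> g a b = g' a b) ->
  fmul f g i j = fmul f' g' i j.
Proof.
move=> Hf Hg; apply: eq_bigr => a _; apply: eq_bigr => b _.
have ha : (a <= i)%N by rewrite -ltnS.
have hb : (b <= j)%N by rewrite -ltnS.
by rewrite Hf // Hg // leq_subr.
Qed.

Lemma fmul_tr N f g i j : (i < N)%N -> (j < N)%N ->
  fmul f g i j = cf (tr N f * tr N g) i j.
Proof.
move=> hi hj; rewrite cfM; apply: fmul_loc => a b ha hb;
  rewrite cf_tr //; [exact: leq_ltn_trans ha hi|exact: leq_ltn_trans hb hj
  |exact: leq_ltn_trans ha hi|exact: leq_ltn_trans hb hj].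
Qed.

Lemma ltn_l i j : (i < (i + j).+1)%N. Proof. by rewrite ltnS leq_addr. Qed.
Lemma ltn_r i j : (j < (i + j).+1)%N. Proof. by rewrite ltnS leq_addl. Qed.

Lemma fmulC f g : fmul f g = fmul g f.
Proof.
apply/funext => i; apply/funext => j.
by rewrite !(fmul_tr _ _ (ltn_l i j) (ltn_r i j)) mulrC.
Qed.

Lemma fmulA_aux f g h i j N : (i < N)%N -> (j < N)%N ->
  fmul f (fmul g h) i j = cf (tr N f * (tr N g * tr N h)) i j.
Proof.
move=> hi hj; rewrite cfM; apply: fmul_loc => a b ha hb.
  by rewrite cf_tr //; [exact: leq_ltn_trans ha hi|exact: leq_ltn_trans hb hj].
by rewrite (fmul_tr (N:=N)) //; [exact: leq_ltn_trans ha hi|exact: leq_ltn_trans hb hj].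
Qed.

Lemma fmulA f g h : fmul f (fmul g h) = fmul (fmul f g) h.
Proof.
apply/funext => i; apply/funext => j.
rewrite (fmulA_aux _ _ _ (ltn_l i j) (ltn_r i j)) fmulC.
rewrite (fmulA_aux _ _ _ (ltn_l i j) (ltn_r i j)).
by rewrite mulrA [X in _ = cf X _ _]mulrC.
Qed.

Lemma fmulDl f g h : fmul (fadd f g) h = fadd (fmul f h) (fmul g h).
Proof.
apply/funext => i; apply/funext => j; rewrite /fmul /fadd -big_split.
apply: eq_bigr => a _; rewrite -big_split; apply: eq_bigr => b _; exact: mulrDl.
Qed.

Lemma fconst_cf c : fconst c = cf (c%:P%:P).
Proof.
apply/funext => i; apply/funext => j; rewrite /cf /fconst !coefC.
by case: i => [|i] /=; rewrite ?coefC ?coef0 //; case: j.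
Qed.

Lemma fmul_const c f i j : fmul (fconst c) f i j = c * f i j.
Proof.
rewrite fconst_cf (fmul_loc (f' := cf (c%:P%:P)) (g' := cf (tr (i + j).+1 f))) //.
  by rewrite -cfM /cf coefCM coefCM -/(cf (tr _ f) i j) cf_tr ?ltn_l ?ltn_r.
move=> a b ha hb; rewrite cf_tr //; [exact: leq_ltn_trans ha (ltn_l i j)|exact: leq_ltn_trans hb (ltn_r i j)].
Qed.

Lemma fmul1 f : fmul (fconst 1) f = f.
Proof. by apply/funext => i; apply/funext => j; rewrite fmul_const mul1r. Qed.

Definition fzero : fps := fun _ _ => 0.
Definition fopp f : fps := fun i j => - f i j.

Lemma faddA : associative (@fadd K).
Proof. by move=> f g h; apply/funext => i; apply/funext => j; rewrite /fadd addrA. Qed.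
Lemma faddC : commutative (@fadd K).
Proof. by move=> f g; apply/funext => i; apply/funext => j; rewrite /fadd addrC. Qed.
Lemma fadd0 : left_id fzero (@fadd K).
Proof. by move=> f; apply/funext => i; apply/funext => j; rewrite /fadd add0r. Qed.
Lemma faddN : left_inverse fzero fopp (@fadd K).
Proof. by move=> f; apply/funext => i; apply/funext => j; rewrite /fadd /fopp addNr. Qed.
Lemma fone_neq0 : fconst 1 != fzero.
Proof.
apply/eqP => H; have := congr1 (fun f : fps => f 0%N 0%N) H.
by rewrite /fconst /fzero /= => /eqP; rewrite oner_eq0.
Qed.

End Base.

Definition FS (K : numFieldType) := fps K.
HB.instance Definition _ (K : numFieldType) := Choice.copy (FS K) (fps K).
HB.instance Definition _ (K : numFieldType) :=
  GRing.isZmodule.Build (FS K) (@faddA K) (@faddC K) (@fadd0 K) (@faddN K).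
HB.instance Definition _ (K : numFieldType) :=
  GRing.Zmodule_isComNzRing.Build (FS K) (@fmulA K) (@fmulC K) (@fmul1 K) (@fmulDl K) (@fone_neq0 K).


Section Ser.
Variable K : numFieldType.
Local Notation FS := (FS K).
Local Notation P := {poly {poly K}}.
Implicit Types (f g h : FS) (p q : P).

Lemma fpsP f g : (forall i j, f i j = g i j) -> f = g.
Proof. by move=> H; apply/funext => i; apply/funext => j. Qed.

Lemma addE f g i j : (f + g) i j = f i j + g i j. Proof. by []. Qed.
Lemma oppE f i j : (- f) i j = - f i j. Proof. by []. Qed.
Lemma subE f g i j : (f - g) i j = f i j - g i j. Proof. by []. Qed.
Lemma zeroE i j : (0 : FS) i j = 0. Proof. by []. Qed.
Lemma mulE f g : f * g = fmul f g. Proof. by []. Qed.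
Lemma fmulE (f g : fps K) : fmul f g = (f : FS) * g. Proof. by []. Qed.
Lemma faddE (f g : fps K) : fadd f g = (f : FS) + g. Proof. by []. Qed.
Lemma oneE : (1 : FS) = fconst 1. Proof. by []. Qed.
Lemma sumE (I : Type) (r : seq I) (Pr : pred I) (F : I -> FS) i j :
  (\sum_(k <- r | Pr k) F k) i j = \sum_(k <- r | Pr k) F k i j.
Proof. exact: (big_morph (fun f : FS => f i j) (fun f g => addE f g i j) (zeroE i j)). Qed.
Lemma scalE c f i j : ((fconst c : FS) * f) i j = c * f i j.
Proof. exact: fmul_const. Qed.
Lemma constE c i j : (fconst c : FS) i j = if (i == 0%N) && (j == 0%N) then c else 0.
Proof. by []. Qed.
Lemma constM c d : (fconst c : FS) * fconst d = fconst (c * d).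
Proof. by apply: fpsP => i j; rewrite scalE !constE; case: ifP; rewrite ?mulr0. Qed.
Lemma constD c d : (fconst c : FS) + fconst d = fconst (c + d).
Proof. by apply: fpsP => i j; rewrite addE !constE; case: ifP; rewrite ?addr0. Qed.
Lemma cfM' p q : (cf (p * q) : FS) = (cf p : FS) * (cf q : FS). Proof. exact: cfM. Qed.
Lemma cfD' p q : (cf (p + q) : FS) = (cf p : FS) + (cf q : FS). Proof. exact: cfD. Qed.

Lemma box_lt i j a b : (a <= i)%N -> (b <= j)%N -> (a < (i + j).+1)%N /\ (b < (i + j).+1)%N.
Proof. move=> ha hb; split; lia. Qed.

Lemma cfl_mul q f i j : ((cf q : FS) * f) i j = cf (q * tr (i + j).+1 f) i j.
Proof.
rewrite cfM mulE; apply: fmul_loc => // a b ha hb.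
by have [h1 h2] := box_lt ha hb; rewrite cf_tr.
Qed.

Lemma fX_cf : (fX : FS) = cf 'X.
Proof.
apply: fpsP => i j; rewrite /cf coefX /fX.
case: i => [|[|i]] //=; rewrite ?coef0 ?coef1 //; by case: j.
Qed.
Lemma fY_cf : (fY : FS) = cf ('X%:P).
Proof.
apply: fpsP => i j; rewrite /cf coefC /fY.
case: i => [|i] //=; rewrite ?coef0 // coefX; by case: j => [|[|j]].
Qed.

Lemma mulX f i j : ((fX : FS) * f) i j = if i is i'.+1 then f i' j else 0.
Proof.
rewrite fX_cf cfl_mul /cf coefXM; case: i => [|i] //=; first by rewrite coef0.
rewrite -/(cf (tr _ f) i j) cf_tr //; lia.
Qed.
Lemma mulY f i j : ((fY : FS) * f) i j = if j is j'.+1 then f i j' else 0.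
Proof.
rewrite fY_cf cfl_mul /cf coefCM coefXM; case: j => [|j] //=.
rewrite -/(cf (tr _ f) i j) cf_tr //; lia.
Qed.

Definition dyP p : P := swapXY (swapXY p)^`().

Lemma fdx_cf p : fdx (cf p) = cf p^`().
Proof. by apply: fpsP => i j; rewrite /fdx /cf coef_deriv coefMn. Qed.
Lemma fdy_cf p : fdy (cf p) = cf (dyP p).
Proof. by apply: fpsP => i j; rewrite /fdy /cf /dyP coef_swapXY coef_deriv coefMn coef_swapXY. Qed.

Lemma dyPM p q : dyP (p * q) = dyP p * q + p * dyP q.
Proof.
by rewrite /dyP rmorphM derivM rmorphD !rmorphM /= !swapXYK.
Qed.

Lemma leibniz_transfer (d : FS -> FS) (dP : P -> P) :
  (forall p, d (cf p) = cf (dP p)) ->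
  (forall p q, dP (p * q) = dP p * q + p * dP q) ->
  (forall f f' i j, (forall a b, (a <= i.+1)%N -> (b <= j.+1)%N -> f a b = f' a b) ->
     d f i j = d f' i j) ->
  forall f g, d (f * g) = d f * g + f * d g.
Proof.
move=> dcf dPM dloc f g; apply: fpsP => i j.
set N := (i + j).+3.
have e1 : d (f * g) i j = d (cf (tr N f * tr N g)) i j.
  apply: dloc => a b ha hb; rewrite mulE (fmul_tr (N := N)) //; rewrite /N; lia.
rewrite e1 dcf dPM cfD' !cfM' -!dcf addE.
congr (_ + _); rewrite !mulE; apply: fmul_loc => a b ha hb //.
- apply: dloc => a' b' ha' hb'; rewrite cf_tr // /N; lia.
- rewrite cf_tr // /N; lia.
- rewrite cf_tr // /N; lia.
- apply: dloc => a' b' ha' hb'; rewrite cf_tr // /N; lia.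
Qed.

Lemma fdxM f g : (fdx (f * g) : FS) = (fdx f : FS) * g + f * (fdx g : FS).
Proof.
apply: (leibniz_transfer (dP := fun p => p^`())) => //.
- exact: fdx_cf.
- exact: derivM.
- by move=> f1 f' i j H; rewrite /fdx H.
Qed.
Lemma fdyM f g : (fdy (f * g) : FS) = (fdy f : FS) * g + f * (fdy g : FS).
Proof.
apply: (leibniz_transfer (dP := dyP)) => //.
- exact: fdy_cf.
- exact: dyPM.
- by move=> f1 f' i j H; rewrite /fdy H.
Qed.

Lemma fdxD f g : (fdx (f + g) : FS) = (fdx f : FS) + (fdx g : FS).
Proof. by apply: fpsP => i j; rewrite /fdx !addE mulrnDl. Qed.
Lemma fdyD f g : (fdy (f + g) : FS) = (fdy f : FS) + (fdy g : FS).
Proof. by apply: fpsP => i j; rewrite /fdy !addE mulrnDl. Qed.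
Lemma fdx_const c : fdx (fconst c) = 0 :> FS.
Proof. by apply: fpsP => i j; rewrite /fdx constE /= mul0rn. Qed.
Lemma fdy_const c : fdy (fconst c) = 0 :> FS.
Proof. by apply: fpsP => i j; rewrite /fdy constE andbF mul0rn. Qed.
Lemma fdxX : fdx fX = 1 :> FS.
Proof. by apply: fpsP => i j; rewrite /fdx /fX oneE constE; case: i => [|i] //=; rewrite ?mul0rn //; case: (j == 0%N). Qed.
Lemma fdyX : fdy fX = 0 :> FS.
Proof. by apply: fpsP => i j; rewrite /fdy /fX andbF mul0rn. Qed.
Lemma fdxY : fdx fY = 0 :> FS.
Proof. by apply: fpsP => i j; rewrite /fdx /fY mul0rn. Qed.
Lemma fdyY : fdy fY = 1 :> FS.
Proof. by apply: fpsP => i j; rewrite /fdy /fY oneE constE; case: j => [|j] //=; rewrite ?andbF ?mul0rn //; case: (i == 0%N). Qed.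

End Ser.

Section Ord.
Variable K : numFieldType.
Local Notation FS := (FS K).
Implicit Types (f g h : FS).

Lemma ord_le f m n : (m <= n)%N -> ord_ge f n -> ord_ge f m.
Proof. by move=> hmn H i j hij; apply: H; lia. Qed.
Lemma ord0 f : ord_ge f 0.
Proof. by move=> i j. Qed.
Lemma ordD f g n : ord_ge f n -> ord_ge g n -> ord_ge (f + g) n.
Proof. by move=> Hf Hg i j h; rewrite addE Hf // Hg // addr0. Qed.
Lemma ordN f n : ord_ge f n -> ord_ge (- f) n.
Proof. by move=> Hf i j h; rewrite oppE Hf // oppr0. Qed.
Lemma ordB f g n : ord_ge f n -> ord_ge g n -> ord_ge (f - g) n.
Proof. by move=> Hf Hg; apply: ordD => //; apply: ordN. Qed.
Lemma ord_zero n : ord_ge (0 : FS) n.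
Proof. by []. Qed.
Lemma ord_sum (I : Type) (r : seq I) (Pr : pred I) (F : I -> FS) n :
  (forall k, Pr k -> ord_ge (F k) n) -> ord_ge (\sum_(k <- r | Pr k) F k) n.
Proof. move=> H; apply: (big_ind (fun f : FS => ord_ge f n)) => // x y; exact: ordD. Qed.
Lemma ordM f g m n : ord_ge f m -> ord_ge g n -> ord_ge (f * g) (m + n).
Proof.
move=> Hf Hg i j hij; rewrite mulE /fmul big1 // => a _; rewrite big1 // => b _.
have ha := ltn_ord a; have hb := ltn_ord b.
case: (ltnP (a + b) m) => h; first by rewrite Hf // mul0r.
rewrite Hg ?mulr0 //; lia.
Qed.
Lemma ord_scal c f n : ord_ge f n -> ord_ge ((fconst c : FS) * f) n.
Proof. by move=> H i j h; rewrite scalE H // mulr0. Qed.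
Lemma ord_dx f n : ord_ge f n -> ord_ge (fdx f) n.-1.
Proof. by move=> H i j h; rewrite /fdx H ?mul0rn //; lia. Qed.
Lemma ord_dy f n : ord_ge f n -> ord_ge (fdy f) n.-1.
Proof. by move=> H i j h; rewrite /fdy H ?mul0rn //; lia. Qed.
Lemma ord_eq0 f : (forall n, ord_ge f n) -> f = 0.
Proof. by move=> H; apply: fpsP => i j; rewrite (H (i + j).+1) //. Qed.
Lemma ord_mulr f g n : ord_ge f n -> ord_ge (f * g) n.
Proof. by move=> H; rewrite -[n]addn0; apply: ordM => //; apply: ord0. Qed.
Lemma ord_mull f g n : ord_ge g n -> ord_ge (f * g) n.
Proof. by move=> H; rewrite mulrC; apply: ord_mulr. Qed.

Section Additive.
Variable phi : FS -> FS.
Hypothesis phiD : forall f g, phi (f + g) = phi f + phi g.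
Lemma phi0 : phi 0 = 0.
Proof. by apply: (@addrI _ (phi 0)); rewrite -phiD !addr0. Qed.
Lemma phiN f : phi (- f) = - phi f.
Proof. by apply: (@addrI _ (phi f)); rewrite -phiD !subrr phi0. Qed.
Lemma phiB f g : phi (f - g) = phi f - phi g.
Proof. by rewrite phiD phiN. Qed.
Lemma phiMn f n : phi (f *+ n) = phi f *+ n.
Proof. by elim: n => [|n IH]; rewrite ?phi0 // !mulrS phiD IH. Qed.
Lemma phi_sum (I : Type) (r : seq I) (Pr : pred I) (F : I -> FS) :
  phi (\sum_(k <- r | Pr k) F k) = \sum_(k <- r | Pr k) phi (F k).
Proof. exact: (big_morph phi phiD phi0). Qed.
End Additive.

Definition ordY (Y : fps K * fps K) := ord_ge Y.1 2 /\ ord_ge Y.2 2.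
Lemma vfE (Y : fps K * fps K) g :
  (vf_apply Y g : FS) = (Y.1 : FS) * (fdx g : FS) + (Y.2 : FS) * (fdy g : FS).
Proof. by []. Qed.
Lemma ord_vf Y g n : ordY Y -> ord_ge g n -> ord_ge (vf_apply Y g) n.+1.
Proof.
move=> [H1 H2] Hg; rewrite vfE; apply: ordD;
  apply: (@ord_le _ _ (2 + n.-1)); try lia; apply: ordM => //;
  [exact: ord_dx|exact: ord_dy].
Qed.
Lemma vfD Y f g : (vf_apply Y (f + g) : FS) = (vf_apply Y f : FS) + (vf_apply Y g : FS).
Proof. by rewrite !vfE fdxD fdyD !mulrDr addrACA. Qed.
Lemma vf_const Y c : (vf_apply Y (fconst c) : FS) = 0.
Proof. by rewrite vfE fdx_const fdy_const !mulr0 addr0. Qed.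
Lemma vfM Y f g : (vf_apply Y (f * g) : FS) = (vf_apply Y f : FS) * g + f * (vf_apply Y g : FS).
Proof. rewrite !vfE fdxM fdyM; ring. Qed.

Lemma vf_iterS Y k g : vf_iter Y k.+1 g = vf_apply Y (vf_iter Y k g).
Proof. by []. Qed.
Lemma ord_iter Y k g : ordY Y -> ord_ge (vf_iter Y k g) k.
Proof.
move=> HY; elim: k => [|k IH]; first exact: ord0.
by rewrite vf_iterS; apply: ord_vf.
Qed.
Lemma vf_iterD Y k f g : (vf_iter Y k (f + g) : FS) = (vf_iter Y k f : FS) + (vf_iter Y k g : FS).
Proof. by elim: k => [|k IH] //; rewrite !vf_iterS IH vfD. Qed.

Lemma vf_iterM Y n f g : (vf_iter Y n (f * g) : FS) =
  \sum_(i < n.+1) ((vf_iter Y (n - i) f : FS) * (vf_iter Y i g : FS)) *+ 'C(n, i).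
Proof.
elim: n => [|n IHn]; first by rewrite big_ord1 /= mulr1n.
rewrite vf_iterS IHn (phi_sum (vfD Y)).
under eq_bigr => i _ do rewrite (phiMn (vfD Y)) vfM mulrnDl.
rewrite big_split /=.
rewrite [X in _ = X]big_ord_recl subn0 bin0 mulr1n.
under [X in _ = _ + X]eq_bigr => i _ do rewrite binS mulrnDr.
rewrite big_split /= addrA.
congr (_ + _).
  rewrite big_ord_recl subn0 bin0 mulr1n /=; congr (_ + _).
  rewrite [RHS]big_ord_recr /= bin_small // mulr0n addr0.
  apply: eq_bigr => i _ /=.
  rewrite /bump /= !add1n subSS -vf_iterS subnSK //.
Qed.
End Ord.


Section Exp.
Variable K : numFieldType.
Local Notation FS := (FS K).
Implicit Types (f g h : FS).

Lemma natS m : (m%:R : FS) = fconst m%:R.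
Proof.
elim: m => [|m IH]; first by apply: fpsP => i j; rewrite constE; case: ifP.
by rewrite -addn1 !natrD IH oneE constD.
Qed.

Lemma fact_binom n k : (k <= n)%N ->
  (n`!%:R)^-1 * 'C(n, k)%:R = ((n - k)`!%:R)^-1 * (k`!%:R)^-1 :> K.
Proof.
move=> hk.
have f1 : (k`!%:R : K) != 0 by rewrite pnatr_eq0 -lt0n fact_gt0.
have f2 : ((n - k)`!%:R : K) != 0 by rewrite pnatr_eq0 -lt0n fact_gt0.
rewrite -(bin_fact hk) !natrM; field.
by rewrite f1 f2 pnatr_eq0 -lt0n bin_gt0 hk.
Qed.

Lemma sum_delta N (F : nat -> K) i : (i < N)%N ->
  \sum_(a < N) F a * (i == a)%:R = F i.
Proof.
move=> hi; rewrite (bigD1 (Ordinal hi)) //= eqxx mulr1 big1 ?addr0 // => a ha.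
have -> : (i == a) = false.
  apply/negbTE; apply: contra ha => /eqP e; apply/eqP/val_inj => /=; by rewrite e.
by rewrite mulr0.
Qed.

Lemma mono_coef a b i j :
  ((fX : FS) ^+ a * (fY : FS) ^+ b) i j = ((i == a) && (j == b))%:R.
Proof.
elim: a i => [|a IH] i.
  rewrite expr0 mul1r; elim: b j => [|b IHb] j.
    by rewrite expr0 oneE constE; case: ifP.
  rewrite exprS mulY; case: j => [|j] /=; first by rewrite andbF.
  by rewrite IHb.
rewrite exprS -mulrA mulX; case: i => [|i] //=.
Qed.

Lemma density (eps : FS -> FS) :
  (forall f g, eps (f + g) = eps f + eps g) ->
  (forall c a b, eps ((fconst c : FS) * ((fX : FS) ^+ a * (fY : FS) ^+ b)) = 0) ->
  (forall f n, ord_ge f n -> ord_ge (eps f) n) ->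
  forall f, eps f = 0.
Proof.
move=> eD eM eO f; apply: fpsP => i j.
set N := (i + j).+1.
pose Q : FS := \sum_(a < N) \sum_(b < N) (fconst (f a b) : FS) * ((fX : FS) ^+ a * (fY : FS) ^+ b).
have eQ : eps Q = 0.
  rewrite (phi_sum eD) big1 // => a _; rewrite (phi_sum eD) big1 //.
have oQ : ord_ge (f - Q) N.
  move=> i' j' h; rewrite subE /Q sumE.
  under eq_bigr => a _ do rewrite sumE.
  under eq_bigr => a _ do under eq_bigr => b _ do
    rewrite scalE mono_coef -mulnb natrM mulrA.
  have hi' : (j' < N)%N by lia.
  have hj' : (i' < N)%N by lia.
  under eq_bigr => a _ do rewrite (@sum_delta N (fun b => f a b * (i' == a)%:R) j' hi').
  by rewrite (@sum_delta N (fun a => f a j') i' hj') subrr.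
rewrite -(subrK Q f) eD eQ addr0 zeroE; apply: (eO _ N oQ); lia.
Qed.

Variable Y : fps K * fps K.
Hypothesis HY : ordY Y.

Definition E N g : FS := \sum_(k < N) (fconst ((k`!%:R)^-1) : FS) * (vf_iter Y k g : FS).

Lemma E_coef N g i j : E N g i j = \sum_(k < N) (k`!%:R)^-1 * vf_iter Y k g i j.
Proof. rewrite /E sumE; apply: eq_bigr => k _; exact: scalE. Qed.

Lemma fexp_E N g i j : (i + j < N)%N -> fexp Y g i j = E N g i j.
Proof.
move=> h; rewrite E_coef /fexp.
rewrite (big_ord_widen N (fun k => (k`!%:R)^-1 * vf_iter Y k g i j)) //.
rewrite big_mkcond /=; apply: eq_bigr => k _; case: ifP => // hk.
rewrite (ord_iter (k:=k) g HY) ?mulr0 //; lia.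
Qed.

Lemma ord_fexpE N g : ord_ge ((fexp Y g : FS) - E N g) N.
Proof. by move=> i j h; rewrite subE (@fexp_E N) // subrr. Qed.

Lemma E_mul_ord N f g : ord_ge (E N f * E N g - E N (f * g)) N.
Proof.
pose Pf : {poly FS} := \poly_(k < N) ((fconst ((k`!%:R)^-1) : FS) * vf_iter Y k f).
pose Pg : {poly FS} := \poly_(k < N) ((fconst ((k`!%:R)^-1) : FS) * vf_iter Y k g).
have EPf : E N f = Pf.[1].
  rewrite (horner_coef_wide 1 (size_poly N _)); apply: eq_bigr => k _.
  by rewrite coef_poly ltn_ord expr1n mulr1.
have EPg : E N g = Pg.[1].
  rewrite (horner_coef_wide 1 (size_poly N _)); apply: eq_bigr => k _.
  by rewrite coef_poly ltn_ord expr1n mulr1.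
have EM : E N (f * g) = \sum_(n < N) (Pf * Pg)`_n.
  rewrite /E; apply: eq_bigr => n _; rewrite vf_iterM coefMr mulr_sumr.
  apply: eq_bigr => k _; rewrite !coef_poly.
  have hk := ltn_ord k; have hn := ltn_ord n.
  have -> : (n - k < N)%N by lia.
  have -> : (k < N)%N by lia.
  rewrite -[_ *+ 'C(n, k)]mulr_natl natS mulrA constM fact_binom; last by lia.
  rewrite -constM; ring.
have prod : E N f * E N g = \sum_(n < N + N) (Pf * Pg)`_n.
  rewrite EPf EPg -hornerM (@horner_coef_wide _ (N + N) (Pf * Pg) 1).
    by apply: eq_bigr => n _; rewrite expr1n mulr1.
  apply: leq_trans (size_mul_leq _ _) _.
  have s1 : (size Pf <= N)%N by apply: size_poly.
  have s2 : (size Pg <= N)%N by apply: size_poly.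
  lia.
rewrite prod EM big_split_ord /= [X in X - _]addrC addrK.
apply: ord_sum => n _; rewrite coefMr; apply: ord_sum => k _; rewrite !coef_poly.
have hk := ltn_ord k.
case: ifP => _; last by rewrite mul0r.
case: ifP => _; last by rewrite mulr0.
apply: (@ord_le _ _ _ ((N + n - k) + k)); first lia.
by apply: ordM; apply: ord_scal; apply: ord_iter.
Qed.

Lemma fexpM f g : (fexp Y (f * g) : FS) = (fexp Y f : FS) * (fexp Y g : FS).
Proof.
apply: fpsP => i j; set N := (i + j).+1.
rewrite (@fexp_E N); last by lia.
have : (E N f * E N g - E N (f * g)) i j = 0 by apply: E_mul_ord; lia.
rewrite subE => /eqP; rewrite subr_eq0 => /eqP <-.
rewrite !mulE; apply: fmul_loc => a b ha hb; rewrite (@fexp_E N) //; lia.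
Qed.

Lemma fexpD f g : (fexp Y (f + g) : FS) = (fexp Y f : FS) + (fexp Y g : FS).
Proof.
apply: fpsP => i j; rewrite addE /fexp -big_split; apply: eq_bigr => k _.
by rewrite vf_iterD addE mulrDr.
Qed.

Lemma vf_iter_const k c : (k > 0)%N -> (vf_iter Y k (fconst c) : FS) = 0.
Proof.
case: k => [|k] // _; elim: k => [|k IH]; first exact: vf_const.
by rewrite vf_iterS IH (phi0 (vfD Y)).
Qed.

Lemma fexp_const c : (fexp Y (fconst c) : FS) = fconst c.
Proof.
apply: fpsP => i j; rewrite /fexp big_ord_recl big1 ?addr0.
  by rewrite fact0 invr1 mul1r.
by move=> k _; rewrite vf_iter_const // mulr0.
Qed.

End Exp.

Section Pull.
Variable K : numFieldType.
Local Notation FS := (FS K).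
Implicit Types (f g h : FS).
Variables X Y : fps K * fps K.
Hypotheses (HX : ordY X) (HY : ordY Y).
Variable phi : FS -> FS.
Hypothesis phiD : forall f g, phi (f + g) = phi f + phi g.
Hypothesis phiC : forall c f, phi ((fconst c : FS) * f) = (fconst c : FS) * phi f.
Hypothesis phiO : forall f n, ord_ge f n -> ord_ge (phi f) n.
Hypothesis phi1 : phi 1 = 1.
Hypothesis phiX : forall f, phi ((fX : FS) * f) = phi fX * phi f.
Hypothesis phiY : forall f, phi ((fY : FS) * f) = phi fY * phi f.

Lemma phi_const c : phi (fconst c) = fconst c.
Proof. by rewrite -[X in phi X](mulr1 (fconst c : FS)) phiC phi1 mulr1. Qed.

Lemma phi_mono a b g :
  phi ((fX : FS) ^+ a * ((fY : FS) ^+ b * g)) = phi fX ^+ a * (phi fY ^+ b * phi g).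
Proof.
elim: a => [|a IH].
  rewrite !expr0 !mul1r; elim: b => [|b IHb]; first by rewrite !expr0 !mul1r.
  by rewrite !exprS -!mulrA phiY IHb.
by rewrite !exprS -!mulrA phiX IH.
Qed.

Lemma phiM f g : phi (f * g) = phi f * phi g.
Proof.
have H := @density K (fun f => phi (f * g) - phi f * phi g).
apply/eqP; rewrite -subr_eq0; apply/eqP; apply: H.
- move=> f1 f2 /=; rewrite mulrDl !phiD; ring.
- move=> c a b /=; rewrite -mulrA phiC phiC -mulrA phi_mono.
  rewrite -[(fY : FS) ^+ b](mulr1 ((fY : FS) ^+ b)) phi_mono phi1; apply/eqP; rewrite subr_eq0; apply/eqP; ring.
- move=> f1 n H; apply: ordB; first by apply: phiO; exact: ord_mulr.
  by apply: ord_mulr; exact: phiO.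
Qed.

Hypothesis chX : (vf_apply Y (phi fX) : FS) = phi X.1.
Hypothesis chY : (vf_apply Y (phi fY) : FS) = phi X.2.

Definition eps g : FS := phi (vf_apply X g) - (vf_apply Y (phi g) : FS).

Lemma eps_mul f g : eps (f * g) = eps f * phi g + phi f * eps g.
Proof. rewrite /eps vfM phiD !phiM vfM; ring. Qed.

Lemma vfXX (Z : fps K * fps K) : (vf_apply Z fX : FS) = Z.1.
Proof. by rewrite vfE fdxX fdyX mulr1 mulr0 addr0. Qed.
Lemma vfYY (Z : fps K * fps K) : (vf_apply Z fY : FS) = Z.2.
Proof. by rewrite vfE fdxY fdyY mulr1 mulr0 add0r. Qed.

Lemma phi_vf g : phi (vf_apply X g) = vf_apply Y (phi g).
Proof.
have ec : forall c, eps (fconst c) = 0.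
  by move=> c; rewrite /eps vf_const (phi0 phiD) phi_const vf_const subrr.
have eX : eps fX = 0 by rewrite /eps vfXX chX subrr.
have eY : eps fY = 0 by rewrite /eps vfYY chY subrr.
have em : forall a b, eps ((fX : FS) ^+ a * (fY : FS) ^+ b) = 0.
  elim=> [|a IH] b.
    rewrite expr0 mul1r; elim: b => [|b IHb]; first by rewrite expr0 oneE ec.
    by rewrite exprS eps_mul IHb eY mul0r mulr0 addr0.
  by rewrite exprS -mulrA eps_mul IH eX mul0r mulr0 addr0.
have e0 : forall c a b, eps ((fconst c : FS) * ((fX : FS) ^+ a * (fY : FS) ^+ b)) = 0.
  by move=> c a b; rewrite eps_mul ec em mul0r mulr0 addr0.
have eD : forall f1 f2, eps (f1 + f2) = eps f1 + eps f2.
  by move=> f1 f2; rewrite /eps !vfD !phiD vfD; ring.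
have eO : forall f1 n, ord_ge f1 n -> ord_ge (eps f1) n.
  move=> f1 n H; apply: ordB.
    apply: phiO; apply: (@ord_le _ _ _ n.+1) => //; exact: ord_vf.
  apply: (@ord_le _ _ _ n.+1) => //; apply: ord_vf => //; exact: phiO.
have := @density K eps eD e0 eO g.
by rewrite /eps => /eqP; rewrite subr_eq0 => /eqP.
Qed.

Lemma phi_iter k g : phi (vf_iter X k g) = vf_iter Y k (phi g).
Proof. by elim: k => [|k IH] //; rewrite !vf_iterS phi_vf IH. Qed.

Lemma phi_fexp g : phi (fexp X g) = fexp Y (phi g).
Proof.
apply: fpsP => i j; set N := (i + j).+1.
rewrite (@fexp_E K Y HY N); last by lia.
have -> : E Y N (phi g) = phi (E X N g).
  rewrite /E (phi_sum phiD); apply: eq_bigr => k _; by rewrite phiC phi_iter.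
have h := phiO (@ord_fexpE K X HX N g).
have := h i j ltac:(lia).
by rewrite (phiB phiD) subE => /eqP; rewrite subr_eq0 => /eqP.
Qed.

End Pull.

Section Charts.
Variable K : numFieldType.
Local Notation FS := (FS K).
Implicit Types (f g h : FS).

Lemma pull1D (t : K) f g : (pull1 t (f + g) : FS) = (pull1 t f : FS) + (pull1 t g : FS).
Proof.
apply: fpsP => i j; rewrite addE /pull1 -big_split; apply: eq_bigr => b _.
by rewrite addE !mulrDl.
Qed.
Lemma pull1C (t : K) c f : (pull1 t ((fconst c : FS) * f) : FS) = (fconst c : FS) * (pull1 t f : FS).
Proof.
apply: fpsP => i j; rewrite scalE /pull1 mulr_sumr; apply: eq_bigr => b _.
by rewrite scalE !mulrA.
Qed.
Lemma pull1O (t : K) f n : ord_ge f n -> ord_ge (pull1 t f) n.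
Proof.
move=> H i j h; rewrite /pull1 big1 // => b _.
have hb := ltn_ord b.
by rewrite H ?mul0r //; lia.
Qed.
Lemma pull1_1 (t : K) : (pull1 t (1 : FS) : FS) = 1.
Proof.
apply: fpsP => i j; rewrite oneE /pull1 big_ord_recl big1 ?addr0.
  rewrite !constE subn0 bin0n /= andbT expr0 mulr1.
  by case: i => [|i] //=; case: j => [|j] //=; rewrite ?mul1r ?mulr0 ?mul0r.
by move=> b _; rewrite constE andbF !mul0r.
Qed.
Lemma pull1X (t : K) f : (pull1 t ((fX : FS) * f) : FS) = (fX : FS) * (pull1 t f : FS).
Proof.
apply: fpsP => i j; rewrite mulX /pull1.
case: i => [|i].
  by rewrite big_ord1 mulX /= !mul0r.
rewrite big_ord_recr /= subnn mulX !mul0r addr0.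
apply: eq_bigr => b _ /=; rewrite mulX subSn; last exact: (ltn_ord b).
by [].
Qed.
Lemma pull1Y (t : K) f :
  (pull1 t ((fY : FS) * f) : FS) = ((fX : FS) * ((fY : FS) + fconst t)) * (pull1 t f : FS).
Proof.
apply: fpsP => i j; rewrite -mulrA mulX /pull1.
case: i => [|i].
  by rewrite big_ord1 mulY /= !mul0r.
rewrite mulrDl addE mulY scalE big_ord_recl /= mulY !mul0r add0r.
case: j => [|j].
  rewrite mulr_sumr add0r; apply: eq_bigr => b _ /=.
  rewrite /bump /= add1n mulY subSS !bin0 !subn0 exprS; ring.
rewrite mulr_sumr -big_split; apply: eq_bigr => b _ /=.
rewrite /bump /= add1n mulY subSS binS natrD subSS.
case: (leqP j.+1 b) => hb.
  rewrite -(subnSK hb) exprS; ring.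
rewrite (bin_small hb); ring.
Qed.

Lemma pull2D f g : (pull2 (f + g) : FS) = (pull2 f : FS) + (pull2 g : FS).
Proof. by apply: fpsP => i j; rewrite addE /pull2; case: ifP; rewrite ?addr0. Qed.
Lemma pull2C c f : (pull2 ((fconst c : FS) * f) : FS) = (fconst c : FS) * (pull2 f : FS).
Proof. by apply: fpsP => i j; rewrite scalE /pull2; case: ifP; rewrite ?scalE ?mulr0. Qed.
Lemma pull2O f n : ord_ge f n -> ord_ge (pull2 f) n.
Proof. by move=> H i j h; rewrite /pull2; case: ifP => // hij; rewrite H //; lia. Qed.
Lemma pull2_1 : (pull2 (1 : FS) : FS) = 1.
Proof.
apply: fpsP => i j; rewrite oneE /pull2 !constE.
case: i => [|i] /=; first by rewrite subn0.
by case: ifP; rewrite ?andbF.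
Qed.
Lemma pull2X f : (pull2 ((fX : FS) * f) : FS) = ((fX : FS) * fY) * (pull2 f : FS).
Proof.
apply: fpsP => i j; rewrite -mulrA mulX.
case: i => [|i]; first by rewrite /pull2 mulX; case: (0 <= j)%N.
rewrite mulY /pull2; case: j => [|j] //=.
rewrite ltnS subSS mulX; by case: (i <= j)%N.
Qed.
Lemma pull2Y f : (pull2 ((fY : FS) * f) : FS) = (fY : FS) * (pull2 f : FS).
Proof.
apply: fpsP => i j; rewrite mulY /pull2.
case: j => [|j].
  case: i => [|i] //=; by rewrite mulY.
case: (leqP i j) => h.
  by rewrite (leqW h) mulY (subSn h).
have -> : (i <= j.+1)%N = (i == j.+1) by apply/idP/eqP; lia.
case: eqP => // ->.
by rewrite mulY subnn.
Qed.

End Charts.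

Section Main.
Variable K : numFieldType.
Local Notation FS := (FS K).
Implicit Types (f g h r : FS).

Lemma cancelX r h : ord_ge r 2 -> ((fX : FS) + r) * h = 0 -> h = 0.
Proof.
move=> Hr H; apply: ord_eq0 => n; elim: n => [|n IH]; first exact: ord0.
have e : (fX : FS) * h = - (r * h) by apply/eqP; rewrite -addr_eq0 -mulrDl H.
move=> i j hij; have := congr1 (fun f : FS => f i.+1 j) e.
rewrite mulX oppE => ->; rewrite (ordM Hr IH) ?oppr0 //; lia.
Qed.
Lemma cancelY r h : ord_ge r 2 -> ((fY : FS) + r) * h = 0 -> h = 0.
Proof.
move=> Hr H; apply: ord_eq0 => n; elim: n => [|n IH]; first exact: ord0.
have e : (fY : FS) * h = - (r * h) by apply/eqP; rewrite -addr_eq0 -mulrDl H.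
move=> i j hij; have := congr1 (fun f : FS => f i j.+1) e.
rewrite mulY oppE => ->; rewrite (ordM Hr IH) ?oppr0 //; lia.
Qed.

Lemma deg2 (X : fps K * fps K) g i j : ordY X -> ord_ge (vf_apply X g) 2 ->
  (i + j < 3)%N -> fexp X g i j = g i j + vf_apply X g i j.
Proof.
move=> HX Hg h; rewrite (@fexp_E K X HX 3) // E_coef.
rewrite !big_ord_recl big_ord0 /=.
have -> : vf_apply X (vf_apply X g) i j = 0 by exact: (ord_vf HX Hg h).
have -> : (bump 0 0)`! = 1%N by [].
by rewrite mulr0 !addr0 fact0 invr1 !mul1r.
Qed.

Lemma pull1O' (t : K) f n i j : ord_ge f n -> (i < n)%N -> pull1 t f i j = 0.
Proof.
move=> H h; rewrite /pull1 big1 // => b _.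
have hb := ltn_ord b.
by rewrite H ?mul0r //; lia.
Qed.

Lemma sum3 (F : nat -> K) : \sum_(i < 3) F i = F 0%N + F 1%N + F 2%N.
Proof. by rewrite !big_ord_recl big_ord0 addr0 addrA. Qed.

Lemma pull1_20 (t : K) f : pull1 t f 2%N 0%N = f 2%N 0%N + f 1%N 1%N * t + f 0%N 2%N * t ^+ 2.
Proof.
rewrite /pull1 (sum3 (fun b => f (2 - b)%N b * 'C(b, 0)%:R * t ^+ (b - 0))).
by rewrite !bin0 !subn0 -[(2 - 1)%N]/1%N subnn expr0 expr1 !mulr1.
Qed.

Lemma hev_1 (t : K) f : hev f 2%N (1, t) = f 2%N 0%N + f 1%N 1%N * t + f 0%N 2%N * t ^+ 2.
Proof.
rewrite /hev (sum3 (fun i => f i (2 - i)%N * (1, t).1 ^+ i * (1, t).2 ^+ (2 - i))) /=.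
rewrite !subn0 -[(2 - 1)%N]/1%N subnn !expr1n expr0 expr1 !mulr1; ring.
Qed.

Lemma hev_0 f : hev f 2%N (0, 1) = f 0%N 2%N.
Proof.
rewrite /hev (sum3 (fun i => f i (2 - i)%N * (0, 1).1 ^+ i * (0, 1).2 ^+ (2 - i))) /=.
by rewrite !expr1n !expr0n /= !mulr1 !mulr0 !addr0 subn0.
Qed.

End Main.

Section Final.
Variable K : numFieldType.
Local Notation FS := (FS K).
Implicit Types (p q a b U W A B : fps K).

Lemma degree2 p q a b : ord_ge a 2 -> ord_ge b 2 ->
  fExp (a, b) = (fadd fX p, fadd fY q) ->
  forall i j, (i + j < 3)%N -> p i j = a i j /\ q i j = b i j.
Proof.
move=> Ha Hb; rewrite /fExp => -[E1 E2] i j h.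
have HX : ordY (a, b) by [].
split.
  have e := @deg2 K (a, b) fX i j HX ltac:(by rewrite vfXX) h.
  have := congr1 (fun f : fps K => f i j) E1; rewrite /= e vfXX /fadd /=.
  by move/addrI.
have e := @deg2 K (a, b) fY i j HX ltac:(by rewrite vfYY) h.
have := congr1 (fun f : fps K => f i j) E2; rewrite /= e vfYY /fadd /=.
by move/addrI.
Qed.

Lemma char_some (t : K) p q : ord_ge p 2 -> ord_ge q 2 -> char_dir p q (Some t) ->
  hev q 2%N (1, t) = t * hev p 2%N (1, t).
Proof.
move=> Hp Hq [k [[Hpk Hqk] [i hi Hnz] [lam [E1 E2]]]].
case: (ltngtP k 2) => hk.
- exfalso; case: Hnz => /eqP []; [apply: Hp|apply: Hq]; lia.
- have z : forall f, ord_ge f k -> hev f 2%N (1, t) = 0.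
    move=> f H; rewrite hev_1.
    have -> : f 2%N 0%N = 0 by apply: H; lia.
    have -> : f 1%N 1%N = 0 by apply: H; lia.
    have -> : f 0%N 2%N = 0 by apply: H; lia.
    by rewrite !mul0r !addr0.
  by rewrite (z _ Hpk) (z _ Hqk) mulr0.
- subst k; rewrite E1 E2 /= mulr1 mulrC //.
Qed.

Lemma char_none p q : ord_ge p 2 -> ord_ge q 2 -> char_dir p q None -> p 0%N 2%N = 0.
Proof.
move=> Hp Hq [k [[Hpk Hqk] [i hi Hnz] [lam [E1 E2]]]].
case: (ltngtP k 2) => hk.
- exfalso; case: Hnz => /eqP []; [apply: Hp|apply: Hq]; lia.
- by apply: Hpk; lia.
- subst k; move: E1; rewrite hev_0 /= mulr0 //.
Qed.

Lemma ordY_chart1 (t : K) p q a b A B : ord_ge a 2 -> ord_ge b 2 ->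
  (forall i j, (i + j < 3)%N -> p i j = a i j /\ q i j = b i j) ->
  hev q 2%N (1, t) = t * hev p 2%N (1, t) ->
  lift_vf (Some t) a b A B -> ordY (A, B).
Proof.
move=> Ha Hb Hd Hc [EA EB].
have HA : ord_ge A 2 by rewrite EA; exact: pull1O.
split => //=.
have key : forall i j, B i j = pull1 t b i.+1 j -
    ((if j is j'.+1 then A i.+1 j' else 0) + t * A i.+1 j).
  move=> i j; have := congr1 (fun f : fps K => f i.+1 j) EB.
  rewrite /= !fmulE !faddE addE mulX mulrDl addE mulY scalE => <-.
  by rewrite addrC addKr.
have A1 : forall j, A 1%N j = 0 by move=> j; rewrite EA; exact: (@pull1O' K t a 2 1 j Ha erefl).
have b1 : forall j, pull1 t b 1%N j = 0 by move=> j; exact: (@pull1O' K t b 2 1 j Hb erefl).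
move=> i j h.
case: i h => [|[|i]]; case: j => [|[|j]] h; try lia.
- by rewrite key b1 A1 mulr0 addr0 subr0.
- by rewrite key b1 !A1 mulr0 addr0 subr0.
- rewrite key add0r EA !pull1_20.
  have [<- <-] := Hd 2%N 0%N erefl.
  have [<- <-] := Hd 1%N 1%N erefl.
  have [<- <-] := Hd 0%N 2%N erefl.
  rewrite -!hev_1 Hc subrr //.
Qed.

Lemma ordY_chart2 p q a b A B : ord_ge a 2 -> ord_ge b 2 ->
  (forall i j, (i + j < 3)%N -> p i j = a i j /\ q i j = b i j) ->
  p 0%N 2%N = 0 ->
  lift_vf None a b A B -> ordY (A, B).
Proof.
move=> Ha Hb Hd Hc [EA EB].
have HB : ord_ge B 2 by rewrite EB; exact: pull2O.
split => //=.
have key : forall i j, A i j = pull2 a i j.+1 - (if i is i'.+1 then B i' j.+1 else 0).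
  move=> i j; have := congr1 (fun f : fps K => f i j.+1) EA.
  rewrite /= !fmulE !faddE addE mulX mulY => <-.
  by rewrite addrK.
move=> i j h.
case: i h => [|[|i]]; case: j => [|[|j]] h; try lia.
- by rewrite key /pull2 /= Ha // subr0.
- by rewrite key /pull2 /= subr0 -(proj1 (Hd 0%N 2%N erefl)).
- by rewrite key /pull2 /= Ha // HB // subr0.
Qed.

Lemma chart1 (t : K) p q a b U W A B :
  ord_ge p 2 -> ord_ge q 2 -> ord_ge a 2 -> ord_ge b 2 ->
  fExp (a, b) = (fadd fX p, fadd fY q) -> char_dir p q (Some t) ->
  lift_map (Some t) p q U W -> lift_vf (Some t) a b A B -> fExp (A, B) = (U, W).
Proof.
move=> Hp Hq Ha Hb Hexp Hch Hm Hv.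
have Hd := degree2 Ha Hb Hexp.
have HX : ordY (a, b) by [].
have HY : ordY (A, B) := ordY_chart1 Ha Hb Hd (char_some Hp Hq Hch) Hv.
move: Hexp; rewrite /fExp => -[E1 E2].
case: Hm => EU EW; case: Hv => EA EB.
have hX : (pull1 t fX : FS) = fX.
  by rewrite -[X in pull1 t X](mulr1 (fX : FS)) pull1X pull1_1 mulr1.
have hY : (pull1 t fY : FS) = (fX : FS) * ((fY : FS) + (fconst t : FS)).
  by rewrite -[X in pull1 t X](mulr1 (fY : FS)) pull1Y pull1_1 mulr1.
have phiX : forall f : FS, (pull1 t ((fX : FS) * f) : FS) = (pull1 t fX : FS) * (pull1 t f : FS).
  by move=> f; rewrite pull1X hX.
have phiY : forall f : FS, (pull1 t ((fY : FS) * f) : FS) = (pull1 t fY : FS) * (pull1 t f : FS).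
  by move=> f; rewrite pull1Y hY.
have chX : (vf_apply (A, B) (pull1 t fX) : FS) = pull1 t (a, b).1.
  by rewrite hX vfXX EA.
have chY : (vf_apply (A, B) (pull1 t fY) : FS) = pull1 t (a, b).2.
  rewrite hY vfM vfXX vfD vfYY vf_const /= -EB !faddE !fmulE addr0; ring.
have PF := @phi_fexp K (a, b) (A, B) HX HY (fun f => pull1 t f)
  (@pull1D K t) (@pull1C K t) (@pull1O K t) (pull1_1 t) phiX phiY chX chY.
have G1 : (fexp (A, B) fX : FS) = U.
  by rewrite -hX -PF E1 faddE pull1D hX EU faddE.
have G2 : (fexp (A, B) fY : FS) = W.
  have e : (fexp (A, B) (pull1 t fY) : FS) = (U : FS) * ((W : FS) + (fconst t : FS)).
    rewrite -PF E2 faddE pull1D hY.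
    by move: EW; rewrite !fmulE !faddE => ->.
  rewrite hY (fexpM HY) (fexpD (A, B)) fexp_const G1 in e.
  have : ((fX : FS) + (pull1 t p : FS)) * ((fexp (A, B) fY : FS) - (W : FS)) = 0.
    rewrite -faddE -EU; apply/eqP; rewrite mulrBr subr_eq0; apply/eqP.
    apply: (@addIr _ ((U : FS) * (fconst t : FS))); rewrite -!mulrDr; exact: e.
  move/(cancelX (pull1O t Hp)) => /eqP; rewrite subr_eq0 => /eqP //.
by rewrite /fExp G1 G2.
Qed.

Lemma chart2 p q a b U W A B :
  ord_ge p 2 -> ord_ge q 2 -> ord_ge a 2 -> ord_ge b 2 ->
  fExp (a, b) = (fadd fX p, fadd fY q) -> char_dir p q None ->
  lift_map None p q U W -> lift_vf None a b A B -> fExp (A, B) = (U, W).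
Proof.
move=> Hp Hq Ha Hb Hexp Hch Hm Hv.
have Hd := degree2 Ha Hb Hexp.
have HX : ordY (a, b) by [].
have HY : ordY (A, B) := ordY_chart2 Ha Hb Hd (char_none Hp Hq Hch) Hv.
move: Hexp; rewrite /fExp => -[E1 E2].
case: Hm => EW EU; case: Hv => EA EB.
have hX : (pull2 fX : FS) = (fX : FS) * fY.
  by rewrite -[X in pull2 X](mulr1 (fX : FS)) pull2X pull2_1 mulr1.
have hY : (pull2 fY : FS) = fY.
  by rewrite -[X in pull2 X](mulr1 (fY : FS)) pull2Y pull2_1 mulr1.
have phiX : forall f : FS, (pull2 ((fX : FS) * f) : FS) = (pull2 fX : FS) * (pull2 f : FS).
  by move=> f; rewrite pull2X hX.
have phiY : forall f : FS, (pull2 ((fY : FS) * f) : FS) = (pull2 fY : FS) * (pull2 f : FS).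
  by move=> f; rewrite pull2Y hY.
have chX : (vf_apply (A, B) (pull2 fX) : FS) = pull2 (a, b).1.
  rewrite hX vfM vfXX vfYY /= -EA !faddE !fmulE; ring.
have chY : (vf_apply (A, B) (pull2 fY) : FS) = pull2 (a, b).2.
  by rewrite hY vfYY EB.
have PF := @phi_fexp K (a, b) (A, B) HX HY (fun f => pull2 f)
  (@pull2D K) (@pull2C K) (@pull2O K) (@pull2_1 K) phiX phiY chX chY.
have G2 : (fexp (A, B) fY : FS) = W.
  by rewrite -hY -PF E2 faddE pull2D hY EW faddE.
have G1 : (fexp (A, B) fX : FS) = U.
  have e : (fexp (A, B) (pull2 fX) : FS) = (U : FS) * (W : FS).
    rewrite -PF E1 faddE pull2D hX.
    by move: EU; rewrite !fmulE !faddE => ->.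
  rewrite hX (fexpM HY) G2 in e.
  have : ((fY : FS) + (pull2 q : FS)) * ((fexp (A, B) fX : FS) - (U : FS)) = 0.
    rewrite -faddE -EW; apply/eqP; rewrite mulrBr subr_eq0; apply/eqP.
    by rewrite mulrC e mulrC.
  move/(cancelY (pull2O Hq)) => /eqP; rewrite subr_eq0 => /eqP //.
by rewrite /fExp G1 G2.
Qed.

End Final.

Unset Implicit Arguments.

Theorem mainTheorem4 (R : realType) (p q a b : fps R[i]) :
  convergent p -> convergent q ->
  ord_ge p 2 -> ord_ge q 2 -> ord_ge a 2 -> ord_ge b 2 ->
  fExp (a, b) = (fadd fX p, fadd fY q) ->
  forall d : option R[i], char_dir p q d ->
  forall U W A B : fps R[i],
    lift_map d p q U W -> lift_vf d a b A B ->
    fExp (A, B) = (U, W).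
Proof.
move=> _ _ Hp Hq Ha Hb Hexp d Hch U W A B Hm Hv.
case: d Hch Hm Hv => [t|] Hch Hm Hv.
  exact: (@chart1 (R[i] : numFieldType) t p q a b U W A B Hp Hq Ha Hb Hexp Hch Hm Hv).
exact: (@chart2 (R[i] : numFieldType) p q a b U W A B Hp Hq Ha Hb Hexp Hch Hm Hv).
Qed.
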